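(* Let $\left\{\mathcal{N}^{(i)}_{A \to B }\right\}_{i=1}^s$ be a compound quantum channel and let $\varepsilon \in (0,1)$. For any $(R,\varepsilon)$-entanglement assisted code for this compound quantum channel, it holds that $$R \leq \max _{|\psi\rangle\langle\psi|_{A A'}} \left( \min_{i \in [1:s]} \mathrm{I}^{\varepsilon}_{\mathrm{H}}(B:A')_{\mathcal{N}^{(i)}_{A \to B } (|\psi\rangle\langle\psi|_{AA'})} \right).$$
   Context: Here $A'\equiv A$ is a purifying register. For quantum states $\rho,\sigma$, $\mathrm{D}^{\varepsilon}_{\mathrm{H}}(\rho\|\sigma) := \max_{0\preceq M\preceq \mathbb{I},\ \mathrm{Tr}[M\rho]\geq 1-\varepsilon} -\log\mathrm{Tr}[M\sigma]$, and for a bipartite state $\rho_{BA'}$, $\mathrm{I}^{\varepsilon}_{\mathrm{H}}(B:A')_{\rho} := \min_{\sigma_B} \mathrm{D}^{\varepsilon}_{\mathrm{H}}(\rho_{BA'}\|\sigma_B\otimes\rho_{A'})$ over all quantum states $\sigma_B$. An $(R,\varepsilon)$-entanglement assisted code for the compound channel $\{\mathcal{N}^{(i)}_{A\to B}\}_{i=1}^s$ (channel index unknown to both parties) consists of a shared entangled state $|\theta\rangle_{E_AE_B}$, an encoding $\mathcal{E}: ME_A\to A$ (messages in $[1:2^R]$) and a decoding $\mathcal{D}: BE_B\to M'$, with $\Pr\{M'\neq m\mid M=m\}\leq\varepsilon$ for all messages $m$ and all $i\in[1:s]$. *)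

(* Defs.v *)
From HB Require Import structures.
From mathcomp Require Import all_boot all_order all_algebra.
From mathcomp Require Import complex mxtens.
From mathcomp Require Import boolp classical_sets reals constructive_ereal ereal exp.
Set Implicit Arguments. Unset Strict Implicit. Unset Printing Implicit Defensive.
Import Order.TTheory GRing.Theory Num.Theory.
Local Open Scope ring_scope.

Section QDefs.
Variable R : realType.
Local Notation C := (R[i]).

Definition adjmx m n (A : 'M[C]_(m, n)) : 'M[C]_(n, m) :=
  \matrix_(i, j) conjc (A j i).

Definition psd n (A : 'M[C]_n) : Prop :=
  A = adjmx A /\ forall v : 'cV[C]_n, 0 <= (adjmx v *m A *m v) 0 0.

Definition loewner n (A B : 'M[C]_n) : Prop := psd (B - A).

Definition density n (rho : 'M[C]_n) : Prop := psd rho /\ \tr rho = 1.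

Definition unit_vec n (v : 'cV[C]_n) : Prop := (adjmx v *m v) 0 0 = 1.
Definition proj n (v : 'cV[C]_n) : 'M[C]_n := v *m adjmx v.

(* Tensor product of two linear maps on matrices, defined on the basis of
   matrix units; the tensor product of spaces X (x) Y is indexed by
   mxtens_index (x, y) (first factor = outer index), as for [tensmx]. *)
Definition tens_map m1 n1 m2 n2 (Phi : 'M[C]_m1 -> 'M[C]_n1)
  (Psi : 'M[C]_m2 -> 'M[C]_n2) (X : 'M[C]_(m1 * m2)) : 'M[C]_(n1 * n2) :=
  \sum_(a < m1) \sum_(b < m1) \sum_(c < m2) \sum_(d < m2)
    X (mxtens_index (a, c)) (mxtens_index (b, d))
      *: (Phi (delta_mx a b) *t Psi (delta_mx c d)).

Definition linear_map m n (Phi : 'M[C]_m -> 'M[C]_n) : Prop :=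
  forall (a : C) (X Y : 'M[C]_m), Phi (a *: X + Y) = a *: Phi X + Phi Y.

Definition completely_positive m n (Phi : 'M[C]_m -> 'M[C]_n) : Prop :=
  forall (k : nat) (X : 'M[C]_(k * m)),
    psd X -> psd (tens_map (@id 'M[C]_k) Phi X).

Definition trace_preserving m n (Phi : 'M[C]_m -> 'M[C]_n) : Prop :=
  forall X : 'M[C]_m, \tr (Phi X) = \tr X.

Definition channel m n (Phi : 'M[C]_m -> 'M[C]_n) : Prop :=
  [/\ linear_map Phi, completely_positive Phi & trace_preserving Phi].

Definition povm K n (Lam : 'I_K -> 'M[C]_n) : Prop :=
  (forall k, psd (Lam k)) /\ \sum_(k < K) Lam k = 1%:M.

Definition ptrace1 m n (X : 'M[C]_(m * n)) : 'M[C]_n :=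
  \matrix_(j, l) \sum_(i < m) X (mxtens_index (i, j)) (mxtens_index (i, l)).

Definition log2 (x : R) : R := ln x / ln 2.

Definition neglog2 (t : R) : \bar R :=
  if t == 0 then +oo%E else (- log2 t)%:E.

Definition DH n (eps : R) (rho sigma : 'M[C]_n) : \bar R :=
  ereal_sup [set y : \bar R | exists M : 'M[C]_n,
    [/\ loewner 0 M, loewner M 1%:M,
        (((1 - eps)%:C)%C <= \tr (M *m rho))%R
      & y = neglog2 (complex.Re (\tr (M *m sigma)))]].

(* hypothesis testing mutual information I_H^eps(B:A')_rho, rho on B (x) A' *)
Definition IH m n (eps : R) (rho : 'M[C]_(m * n)) : \bar R :=
  ereal_inf [set y : \bar R | exists sigma : 'M[C]_m,
    density sigma /\ y = DH eps rho (sigma *t ptrace1 rho)].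

End QDefs.

(* Main.v *)
Require Import Defs.
From HB Require Import structures.
From mathcomp Require Import all_boot all_order all_algebra.
From mathcomp Require Import complex mxtens.
From mathcomp Require Import boolp classical_sets reals constructive_ereal ereal exp.
From mathcomp Require Import spectral sesquilinear.
Import Order.TTheory GRing.Theory Num.Theory.
Local Open Scope ring_scope.
Section Helpers.
Context {R : realType}.
Local Notation C := R[i].
Local Notation ix := mxtens_index.

Lemma conjcM (x y : C) : conjc (x * y) = conjc x * conjc y.
Proof. exact: rmorphM. Qed.
Lemma conjc_sum (I : finType) (F : I -> C) : conjc (\sum_i F i) = \sum_i conjc (F i).
Proof. exact: rmorph_sum. Qed.

Lemma sum_tens (m n : nat) (F : 'I_(m * n) -> C) :
  \sum_(k < m*n) F k = \sum_(i < m) \sum_(j < n) F (ix (i, j)).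
Proof.
rewrite pair_big /= (reindex (@mxtens_index m n)) /=; last first.
  by exists (@mxtens_unindex m n) => k _; rewrite (mxtens_indexK, mxtens_unindexK).
by apply: eq_bigr => -[i j].
Qed.

Lemma adjE m n (A : 'M[C]_(m,n)) i j : adjmx A i j = conjc (A j i).
Proof. by rewrite mxE. Qed.

Lemma adjmx_mul m n p (A : 'M[C]_(m,n)) (B : 'M[C]_(n,p)) :
  adjmx (A *m B) = adjmx B *m adjmx A.
Proof.
apply/matrixP=> i j; rewrite !mxE rmorph_sum; apply: eq_bigr => k _.
by rewrite !mxE rmorphM mulrC.
Qed.

Lemma adjmxK m n (A : 'M[C]_(m,n)) : adjmx (adjmx A) = A.
Proof. by apply/matrixP=> i j; rewrite !mxE conjcK. Qed.

Lemma adjmxD m n (A B : 'M[C]_(m,n)) : adjmx (A + B) = adjmx A + adjmx B.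
Proof. by apply/matrixP=> i j; rewrite !mxE rmorphD. Qed.

Lemma adjmxN m n (A : 'M[C]_(m,n)) : adjmx (- A) = - adjmx A.
Proof. by apply/matrixP=> i j; rewrite !mxE rmorphN. Qed.

Lemma adjmxB m n (A B : 'M[C]_(m,n)) : adjmx (A - B) = adjmx A - adjmx B.
Proof. by rewrite adjmxD adjmxN. Qed.

Lemma adjmx_sum m n (I : finType) (F : I -> 'M[C]_(m,n)) :
  adjmx (\sum_i F i) = \sum_i adjmx (F i).
Proof.
apply/matrixP=> i j; rewrite mxE !summxE rmorph_sum; apply: eq_bigr => k _.
by rewrite mxE.
Qed.

Lemma adjmx1 n : adjmx (1%:M : 'M[C]_n) = 1%:M.
Proof. by apply/matrixP=> i j; rewrite !mxE rmorph_nat eq_sym. Qed.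

Lemma adjmxZ m n (c : C) (A : 'M[C]_(m,n)) : adjmx (c *: A) = conjc c *: adjmx A.
Proof. by apply/matrixP=> i j; rewrite !mxE rmorphM. Qed.

Lemma adjmx_tens m n p q (A : 'M[C]_(m,n)) (B : 'M[C]_(p,q)) :
  adjmx (A *t B) = adjmx A *t adjmx B.
Proof.
apply/matrixP=> i j.
case: (mxtens_indexP i) => i0 i1; case: (mxtens_indexP j) => j0 j1.
by rewrite tensmxE !mxE !mxtens_indexK rmorphM.
Qed.

Lemma tensmx_sumr m n p q (I : finType) (A : 'M[C]_(m,n)) (F : I -> 'M[C]_(p,q)) :
  A *t (\sum_i F i) = \sum_i A *t F i.
Proof.
apply/matrixP=> i j; rewrite [RHS]summxE mxE summxE mulr_sumr; apply: eq_bigr => k _.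
by rewrite !mxE.
Qed.

Lemma tensmx_suml m n p q (I : finType) (A : 'M[C]_(m,n)) (F : I -> 'M[C]_(p,q)) :
  (\sum_i F i) *t A = \sum_i F i *t A.
Proof.
apply/matrixP=> i j; rewrite [RHS]summxE mxE summxE mulr_suml; apply: eq_bigr => k _.
by rewrite !mxE.
Qed.

Lemma tensmxZr m n p q (c : C) (A : 'M[C]_(m,n)) (B : 'M[C]_(p,q)) :
  A *t (c *: B) = c *: (A *t B).
Proof. by apply/matrixP=> i j; rewrite !mxE mulrCA. Qed.

Lemma tensmxZl m n p q (c : C) (A : 'M[C]_(m,n)) (B : 'M[C]_(p,q)) :
  (c *: A) *t B = c *: (A *t B).
Proof. by apply/matrixP=> i j; rewrite !mxE mulrA. Qed.

Lemma mxtrace_tens m n (A : 'M[C]_m) (B : 'M[C]_n) : \tr (A *t B) = \tr A * \tr B.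
Proof.
rewrite /mxtrace sum_tens mulr_suml; apply: eq_bigr => i _.
rewrite mulr_sumr; apply: eq_bigr => j _; by rewrite tensmxE.
Qed.

Lemma tens11 m n : (1%:M : 'M[C]_m) *t (1%:M : 'M[C]_n) = 1%:M.
Proof.
apply/matrixP=> i j.
case: (mxtens_indexP i) => i0 i1; case: (mxtens_indexP j) => j0 j1.
rewrite tensmxE !mxE -natrM.
have -> : (ix (i0,i1) == ix (j0,j1)) = (i0 == j0) && (i1 == j1).
  apply/eqP/andP => [/(can_inj (@mxtens_indexK _ _)) [-> ->] | [/eqP-> /eqP->]] //.
by rewrite mulnb.
Qed.

Definition blk m k (X : 'M[C]_(m * k)) (a b : 'I_m) : 'M[C]_k :=
  \matrix_(c, d) X (ix (a, c)) (ix (b, d)).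
Definition blkl k m (X : 'M[C]_(k * m)) (a b : 'I_m) : 'M[C]_k :=
  \matrix_(c, d) X (ix (c, a)) (ix (d, b)).
Arguments blk {m k}. Arguments blkl {k m}.

Lemma tm_blk m n k (Phi : 'M[C]_m -> 'M[C]_n) (X : 'M[C]_(m * k)) :
  tens_map Phi (@id 'M[C]_k) X = \sum_a \sum_b Phi (delta_mx a b) *t blk X a b.
Proof.
rewrite /tens_map; apply: eq_bigr => a _; apply: eq_bigr => b _.
rewrite [blk X a b]matrix_sum_delta tensmx_sumr; apply: eq_bigr => c _.
rewrite tensmx_sumr; apply: eq_bigr => d _.
by rewrite tensmxZr mxE.
Qed.

Lemma tm_blkl m n k (Phi : 'M[C]_m -> 'M[C]_n) (X : 'M[C]_(k * m)) :
  tens_map (@id 'M[C]_k) Phi X = \sum_a \sum_b blkl X a b *t Phi (delta_mx a b).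
Proof.
rewrite /tens_map.
under eq_bigr do rewrite exchange_big.
under eq_bigr do under eq_bigr do rewrite exchange_big.
rewrite exchange_big; apply: eq_bigr => c _.
rewrite exchange_big; apply: eq_bigr => d _.
rewrite [blkl X c d]matrix_sum_delta tensmx_suml; apply: eq_bigr => a _.
rewrite tensmx_suml; apply: eq_bigr => b _.
by rewrite tensmxZl mxE.
Qed.

Lemma lin_expand m n (Phi : 'M[C]_m -> 'M[C]_n) : linear_map Phi ->
  forall Y, Phi Y = \sum_a \sum_b Y a b *: Phi (delta_mx a b).
Proof.
move=> lin Y.
have {}lin : forall a (X Z : 'M[C]_m), Phi (a *: X + Z) = a *: Phi X + Phi Z := lin.
have P0 : Phi 0 = 0.
  have h := lin 1 0 0; rewrite !scale1r addr0 in h.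
  by have := congr1 (fun z => z - Phi 0) h; rewrite /= subrr addrK => E; apply: esym.
have PD : {morph Phi : x y / x + y}.
  by move=> x y; have := lin 1 x y; rewrite !scale1r.
have PZ : forall a x, Phi (a *: x) = a *: Phi x.
  by move=> a x; have := lin a x 0; rewrite !addr0 P0 addr0.
rewrite {1}[Y]matrix_sum_delta (big_morph Phi PD P0); apply: eq_bigr => a _.
by rewrite (big_morph Phi PD P0); apply: eq_bigr => b _; rewrite PZ.
Qed.

End Helpers.
Arguments blk {R m k}. Arguments blkl {R k m}.
Section Psd.
Context {R : realType}.
Local Notation C := R[i].
Local Notation ix := mxtens_index.

Lemma adj_tC m n (A : 'M[C]_(m,n)) : adjmx A = map_mx Num.conj (trmx A).
Proof. by apply/matrixP=> i j; rewrite !mxE. Qed.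

Lemma psd_conj p n (D : 'M[C]_p) (W : 'M[C]_(p, n)) :
  psd D -> psd (adjmx W *m D *m W).
Proof.
move=> [hD qD]; split.
  by rewrite !adjmx_mul adjmxK -hD mulmxA.
move=> v; rewrite -!mulmxA !mulmxA -adjmx_mul -[_ *m v]mulmxA; exact: qD.
Qed.

Lemma psd_add n (A B : 'M[C]_n) : psd A -> psd B -> psd (A + B).
Proof.
move=> [hA qA] [hB qB]; split; first by rewrite adjmxD -hA -hB.
move=> v; rewrite mulmxDr mulmxDl mxE; exact: addr_ge0.
Qed.

Lemma psd0 n : psd (0 : 'M[C]_n).
Proof.
split; first by apply/matrixP=> i j; rewrite !mxE rmorph0.
by move=> v; rewrite mulmx0 mul0mx mxE.
Qed.

Lemma psd_sum n (I : finType) (P : pred I) (F : I -> 'M[C]_n) :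
  (forall i, P i -> psd (F i)) -> psd (\sum_(i | P i) F i).
Proof.
move=> h; elim/big_rec: _ => [|i A Pi pA]; first exact: psd0.
exact: psd_add (h i Pi) pA.
Qed.

Lemma psd_proj n (v : 'cV[C]_n) : psd (proj v).
Proof.
rewrite /proj; split; first by rewrite adjmx_mul adjmxK.
move=> w; rewrite mulmxA -mulmxA.
have -> : adjmx v *m w = adjmx (adjmx w *m v) by rewrite adjmx_mul adjmxK.
rewrite mxE big_ord1 [X in _ * X]mxE.
exact: mul_conjC_ge0.
Qed.

Lemma psd_factor n (P : 'M[C]_n) : psd P -> exists Y : 'M[C]_n, P = Y *m adjmx Y.
Proof.
move=> [hP qP].
have nP : P \is normalmx.
  by apply/normalmxP; rewrite -adj_tC -hP.
have E := orthomx_spectralP nP.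
set U := spectralmx P in E; set s := spectral_diag P in E.
have Uu : U \is unitarymx by exact: spectral_unitarymx.
rewrite invmx_unitary // -adj_tC in E.
have UU : U *m adjmx U = 1%:M by rewrite adj_tC; apply/unitarymxP.
have s0 : forall k, 0 <= s 0 k.
  move=> k; have := qP (adjmx U *m delta_mx k 0).
  rewrite adjmx_mul adjmxK E -!mulmxA !(mulmxA U) UU !mul1mx.
  have -> : adjmx (delta_mx k 0) = delta_mx 0 k :> 'M[C]_(1, n).
    by apply/matrixP=> i j; rewrite !mxE rmorph_nat andbC.
  rewrite -colE -rowE.
  by rewrite !mxE eqxx mulr1n.
pose r := \row_k sqrtC (s 0 k).
exists (adjmx U *m diag_mx r).
rewrite adjmx_mul adjmxK.
have -> : adjmx (diag_mx r) = diag_mx r.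
  apply/matrixP=> i j; rewrite !mxE; case: (eqVneq j i) => [->|ne].
    by rewrite !mulr1n; apply: (@geC0_conj _ (sqrtC _)); rewrite sqrtC_ge0.
  by rewrite !mulr0n rmorph0.
rewrite -!mulmxA [diag_mx r *m _]mulmxA mulmx_diag {1}E -mulmxA; congr (_ *m (diag_mx _ *m _)).
by apply/rowP=> k; rewrite !mxE -expr2 sqrtCK.
Qed.

Lemma factor_unitary m n (F : 'M[C]_(m,n)) : (m <= n)%N ->
  exists X : 'M[C]_m, exists Z : 'M[C]_(m,n), F = X *m Z /\ Z *m adjmx Z = 1%:M.
Proof.
move=> le; have Zu := schmidt_unitarymx F le.
have /submxP [X EX] := schmidt_sub F.
exists X, (schmidt F); split => //.
by rewrite adj_tC; apply/unitarymxP.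
Qed.

End Psd.
Section More.
Context {R : realType}.
Local Notation C := R[i].
Local Notation ix := mxtens_index.

Lemma mxtrace_sum n (I : finType) (F : I -> 'M[C]_n) :
  \tr (\sum_i F i) = \sum_i \tr (F i).
Proof. by elim/big_rec2: _ => [|i x y _ <-]; rewrite ?mxtrace0 ?mxtraceD. Qed.

Lemma ptrace1_tens m n (A : 'M[C]_m) (B : 'M[C]_n) : ptrace1 (A *t B) = \tr A *: B.
Proof.
apply/matrixP=> j l; rewrite /ptrace1 !mxE mulr_suml; apply: eq_bigr => i _.
by rewrite !mxE !mxtens_indexK.
Qed.

Lemma ptrace1_sum m n (I : finType) (F : I -> 'M[C]_(m * n)) :
  ptrace1 (\sum_i F i) = \sum_i ptrace1 (F i).
Proof.
apply/matrixP=> j l; rewrite /ptrace1 mxE summxE.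
under eq_bigr do rewrite summxE.
rewrite exchange_big; apply: eq_bigr => i _; by rewrite mxE.
Qed.

Lemma conjW b e d (V : 'M[C]_(e, d)) (A : 'M[C]_b) (B : 'M[C]_d) :
  ((1%:M : 'M[C]_b) *t V) *m (A *t B) *m adjmx ((1%:M : 'M[C]_b) *t V)
  = A *t (V *m B *m adjmx V).
Proof. by rewrite adjmx_tens adjmx1 !tensmx_mul mul1mx mulmx1. Qed.

Lemma adjWW b e d (V : 'M[C]_(e, d)) :
  adjmx ((1%:M : 'M[C]_b) *t V) *m ((1%:M : 'M[C]_b) *t V)
  = (1%:M : 'M[C]_b) *t (adjmx V *m V).
Proof. by rewrite adjmx_tens adjmx1 !tensmx_mul mul1mx. Qed.

Lemma tr_delta m (a b : 'I_m) : \tr (delta_mx a b : 'M[C]_m) = (a == b)%:R.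
Proof.
rewrite /mxtrace (bigD1 a) //= big1 => [|k ne]; rewrite !mxE.
  by rewrite eqxx /= addr0; case: (a == b).
by rewrite (negPf ne).
Qed.

Lemma sum_delta_eq m (F : 'I_m -> 'I_m -> 'M[C]_m) :
  \sum_a \sum_b (a == b)%:R *: F a b = \sum_a F a a.
Proof.
apply: eq_bigr => a _; rewrite (bigD1 a) //= big1 => [|b ne].
  by rewrite eqxx scale1r addr0.
by rewrite eq_sym (negPf ne) scale0r.
Qed.

Lemma sum4_swap (V : nmodType) m n p q (F : 'I_m -> 'I_n -> 'I_p -> 'I_q -> V) :
  \sum_a \sum_b \sum_c \sum_d F a b c d = \sum_c \sum_d \sum_a \sum_b F a b c d.
Proof.
under eq_bigr do rewrite exchange_big.
under eq_bigr do under eq_bigr do rewrite exchange_big.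
rewrite exchange_big; apply: eq_bigr => c _.
by rewrite exchange_big.
Qed.

End More.
Local Notation ix := mxtens_index.
Local Notation unix := mxtens_unindex.

Theorem theorem2 (R : realType) (dA dB dEA dEB s K : nat)
  (N : 'I_s -> 'M[R[i]]_dA -> 'M[R[i]]_dB) (eps : R)
  (theta : 'cV[R[i]]_(dEA * dEB))
  (Enc : 'I_K -> 'M[R[i]]_dEA -> 'M[R[i]]_dA)
  (Dec : 'I_K -> 'M[R[i]]_(dB * dEB)) :
  (0 < s)%N -> (0 < K)%N ->
  (forall i, channel (N i)) ->
  0 < eps < 1 ->
  unit_vec theta ->
  (forall m, channel (Enc m)) ->
  povm Dec ->
  (forall (m : 'I_K) (i : 'I_s),
     1 - \tr (Dec m *m tens_map (N i \o Enc m) (@id 'M[R[i]]_dEB) (proj theta))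
       <= (eps%:C)%C) ->
  exists psi : 'cV[R[i]]_(dA * dA),
    unit_vec psi /\
    forall i : 'I_s,
      ((log2 (K%:R : R))%:E <= IH eps (tens_map (N i) (@id 'M[R[i]]_dA) (proj psi)))%E.
Proof.
move=> s0 K0 Nch /andP[eps0 eps1] Hth Ench [Dpsd Dsum] Hsucc.
have He : (0 < dEB)%N.
  case: (posnP dEB) => // E0; exfalso.
  move: Hth; rewrite /unit_vec mxE big1 => [|k _].
    by move/eqP; rewrite eq_sym oner_eq0.
  by have := ltn_ord k; rewrite {2}E0 muln0.
pose th' : 'cV[R[i]]_(dEB * dEA) := \col_k theta (ix ((unix k).2, (unix k).1)) 0.
have th'E : forall c al, th' (ix (c, al)) 0 = theta (ix (al, c)) 0.
  by move=> c al; rewrite mxE mxtens_indexK.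
pose P m := tens_map (@id 'M[R[i]]_dEB) (Enc m) (proj th').
have Ppsd : forall m, psd (P m).
  by move=> m; have [_ cp _] := Ench m; apply: cp; apply: psd_proj.
have /choice [Y HY] : forall m, exists Y : 'M[R[i]]_(dEB * dA), P m = Y *m adjmx Y.
  by move=> m; apply: psd_factor (Ppsd m).
pose kinv : R[i] := (K%:R)^-1.
pose ka := sqrtC kinv.
have kaJ : conjc ka = ka.
  by apply: (@geC0_conj _ ka); rewrite sqrtC_ge0 invr_ge0 ler0n.
have kaka : ka * ka = kinv by rewrite -expr2 sqrtCK.
pose D := (K * (dEB * (dEB * dA)))%N.
pose Phi : 'M[R[i]]_(dA, D) := \matrix_(x, k)
  (ka * Y (unix k).1 (ix ((unix (unix k).2).1, x)) (unix (unix k).2).2).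
have PhiE : forall x m c j, Phi x (ix (m, ix (c, j))) = ka * Y m (ix (c, x)) j.
  by move=> x m c j; rewrite mxE !mxtens_indexK.
have leD : (dA <= D)%N.
  rewrite /D; apply: leq_trans (leq_pmull _ K0); apply: leq_trans (leq_pmull _ He).
  exact: leq_pmull.
have [X [Z [HPhi HZ]]] := @factor_unitary _ _ _ Phi leD.
pose psi : 'cV[R[i]]_(dA * dA) := \col_k X (unix k).1 (unix k).2.
have psiE : forall x y, psi (ix (x, y)) 0 = X x y.
  by move=> x y; rewrite mxE mxtens_indexK.
pose V m j : 'M[R[i]]_(dEB, dA) := \matrix_(c, y) Z y (ix (m, ix (c, j))).
pose W m j := (1%:M : 'M[R[i]]_dB) *t V m j.
pose T m x x' : 'M[R[i]]_dEB := \matrix_(c, c') P m (ix (c, x)) (ix (c', x')).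
have K2b : forall m x x' c c', \sum_j Phi x (ix (m, ix (c, j))) * conjc (Phi x' (ix (m, ix (c', j))))
    = kinv * P m (ix (c, x)) (ix (c', x')).
  move=> m x x' c c'; rewrite [in RHS]HY [in RHS]mxE mulr_sumr; apply: eq_bigr => j _.
  by rewrite !PhiE conjcM kaJ [in RHS]mxE mulrACA kaka.
have Vu : forall m j x c, (V m j *m trmx (row x X)) c 0 = Phi x (ix (m, ix (c, j))).
  move=> m j x c; rewrite HPhi !mxE; apply: eq_bigr => y _; by rewrite !mxE mulrC.
have blkE : forall x x', blk (proj psi) x x' = trmx (row x X) *m adjmx (trmx (row x' X)).
  move=> x x'; apply/matrixP=> y y'; rewrite /blk /proj !mxE !big_ord1 !mxE.
  by rewrite !mxtens_indexK.
have K2 : forall m x x', \sum_j V m j *m blk (proj psi) x x' *m adjmx (V m j) = kinv *: T m x x'.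
  move=> m x x'; apply/matrixP => c c'; rewrite summxE.
  under eq_bigr do rewrite blkE mulmxA -mulmxA -adjmx_mul mxE big_ord1 [adjmx _ _ _]mxE !Vu.
  by rewrite K2b !mxE.
have K1 : \sum_m \sum_j adjmx (V m j) *m V m j = 1%:M.
  apply/matrixP => y y'.
  have h := congr1 (fun M : 'M[R[i]]_dA => M y' y) HZ; rewrite /= !mxE in h.
  rewrite [RHS]mxE eq_sym -h sum_tens summxE; apply: eq_bigr => m _.
  rewrite sum_tens summxE [RHS]exchange_big; apply: eq_bigr => j _.
  rewrite mxE; apply: eq_bigr => c _.
  by rewrite !mxE mulrC.
have K3 : forall m i, tens_map (N i \o Enc m) (@id 'M[R[i]]_dEB) (proj theta)
    = \sum_x \sum_x' N i (delta_mx x x') *t T m x x'.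
  have Tdef : forall m x x', T m x x' =
      \sum_al \sum_al' Enc m (delta_mx al al') x x' *: blk (proj theta) al al'.
    move=> m x x'; apply/matrixP => c c'; rewrite mxE /P tm_blkl summxE.
    rewrite summxE; apply: eq_bigr => al _; rewrite !summxE; apply: eq_bigr => al' _.
    by rewrite tensmxE !mxE !big_ord1 mulrC !mxE !mxtens_indexK.
  move=> m i; have [Nlin _ _] := Nch i.
  rewrite tm_blk /=.
  under eq_bigr do under eq_bigr do rewrite (lin_expand _ _ _ Nlin) tensmx_suml.
  under eq_bigr do under eq_bigr do under eq_bigr do rewrite tensmx_suml.
  rewrite sum4_swap; apply: eq_bigr => x _; apply: eq_bigr => x' _.
  rewrite Tdef tensmx_sumr; apply: eq_bigr => al _; rewrite tensmx_sumr; apply: eq_bigr => al' _.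
  by rewrite tensmxZl tensmxZr.
have K6 : forall m i, \sum_j W m j *m tens_map (N i) (@id 'M[R[i]]_dA) (proj psi) *m adjmx (W m j)
    = kinv *: tens_map (N i \o Enc m) (@id 'M[R[i]]_dEB) (proj theta).
  move=> m i; rewrite K3 tm_blk /W.
  under eq_bigr do rewrite mulmx_sumr mulmx_suml.
  under eq_bigr do under eq_bigr do rewrite mulmx_sumr mulmx_suml.
  under eq_bigr do under eq_bigr do under eq_bigr do rewrite conjW.
  rewrite exchange_big; under eq_bigr do rewrite exchange_big.
  rewrite scaler_sumr; apply: eq_bigr => x _; rewrite scaler_sumr; apply: eq_bigr => x' _.
  by rewrite -tensmx_sumr K2 tensmxZr.
pose thE : 'M[R[i]]_dEB := \matrix_(c, c') \sum_al th' (ix (c, al)) 0 * conjc (th' (ix (c', al)) 0).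
have trE : forall m al al', \sum_x Enc m (delta_mx al al') x x = (al == al')%:R.
  by move=> m al al'; have [_ _ tp] := Ench m; have := tp (delta_mx al al'); rewrite tr_delta.
have Tsum : forall m, \sum_x T m x x = thE.
  move=> m; apply/matrixP => c c'; rewrite summxE [RHS]mxE.
  under eq_bigr => x _ do rewrite mxE /P tm_blkl summxE.
  under eq_bigr do under eq_bigr do rewrite summxE.
  rewrite exchange_big; under eq_bigr do rewrite exchange_big.
  apply: eq_bigr => al _; rewrite (bigD1 al) //= [X in _ + X]big1 => [|al' ne].
    under eq_bigr do rewrite tensmxE.
    by rewrite -mulr_sumr trE eqxx mulr1 addr0 !mxE big_ord1 !mxE.
  under eq_bigr do rewrite tensmxE.
  by rewrite -mulr_sumr trE eq_sym (negPf ne) mulr0.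
have trthE : \tr thE = 1.
  move: Hth; rewrite /unit_vec mxE sum_tens => <-.
  rewrite /mxtrace; under eq_bigr do rewrite mxE.
  rewrite exchange_big; apply: eq_bigr => al _; apply: eq_bigr => c _.
  by rewrite !th'E mxE mulrC.
have ptr : forall i, ptrace1 (tens_map (N i) (@id 'M[R[i]]_dA) (proj psi)) = \sum_x blk (proj psi) x x.
  move=> i; have [_ _ tp] := Nch i.
  rewrite tm_blk ptrace1_sum; under eq_bigr do rewrite ptrace1_sum.
  under eq_bigr do under eq_bigr do rewrite ptrace1_tens tp tr_delta.
  by rewrite sum_delta_eq.
have K7 : forall m (sg : 'M[R[i]]_dB) i,
    \sum_j W m j *m (sg *t ptrace1 (tens_map (N i) (@id 'M[R[i]]_dA) (proj psi))) *m adjmx (W m j)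
    = sg *t (kinv *: thE).
  move=> m sg i; rewrite ptr /W.
  under eq_bigr do rewrite conjW.
  rewrite -tensmx_sumr; congr (_ *t _).
  under eq_bigr do rewrite mulmx_sumr mulmx_suml.
  rewrite exchange_big -(Tsum m) scaler_sumr; apply: eq_bigr => x _; exact: K2.
pose M' := \sum_m \sum_j adjmx (W m j) *m Dec m *m W m j.
have trW : forall Q, \tr (M' *m Q) = \sum_m \tr (Dec m *m \sum_j W m j *m Q *m adjmx (W m j)).
  move=> Q; rewrite /M' mulmx_suml mxtrace_sum; apply: eq_bigr => m _.
  rewrite mulmx_suml mxtrace_sum mulmx_sumr mxtrace_sum; apply: eq_bigr => j _.
  by rewrite -!mulmxA mxtrace_mulC !mulmxA.
have Mpsd : psd M'.
  by apply: psd_sum => m _; apply: psd_sum => j _; apply: psd_conj.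
have M1 : psd (1%:M - M').
  have E1 : 1%:M = \sum_m \sum_j adjmx (W m j) *m W m j.
    rewrite /W; under eq_bigr do under eq_bigr do rewrite adjWW.
    under eq_bigr do rewrite -tensmx_sumr.
    by rewrite -tensmx_sumr K1 tens11.
  have DC : forall m, psd (1%:M - Dec m).
    move=> m; rewrite -Dsum (bigD1 m) //= addrC addrK.
    by apply: psd_sum => k _.
  rewrite {1}E1 /M' -sumrB; apply: psd_sum => m _.
  rewrite -sumrB; apply: psd_sum => j _.
  have -> : adjmx (W m j) *m W m j - adjmx (W m j) *m Dec m *m W m j
      = adjmx (W m j) *m (1%:M - Dec m) *m W m j.
    by rewrite mulmxBr mulmxBl mulmx1.
  exact: psd_conj.
have KC0 : (K%:R : R[i]) != 0 by rewrite pnatr_eq0 -lt0n.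
have Hunit : unit_vec psi.
  have XX : X *m adjmx X = Phi *m adjmx Phi.
    by rewrite HPhi adjmx_mul mulmxA -(mulmxA X) HZ mulmx1.
  rewrite /unit_vec mxE sum_tens.
  transitivity (\tr (X *m adjmx X)).
    rewrite /mxtrace; apply: eq_bigr => x _; rewrite mxE; apply: eq_bigr => y _.
    by rewrite !mxE !mxtens_indexK mulrC.
  rewrite XX /mxtrace.
  under eq_bigr do rewrite mxE sum_tens.
  under eq_bigr do under eq_bigr do rewrite sum_tens.
  under eq_bigr do under eq_bigr do under eq_bigr do under eq_bigr do rewrite [adjmx _ _ _]mxE.
  under eq_bigr do under eq_bigr do under eq_bigr do rewrite K2b.
  transitivity (\sum_(m < K) kinv * \tr thE).
    rewrite exchange_big; apply: eq_bigr => m _; rewrite -(Tsum m) /mxtrace mulr_sumr.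
    rewrite exchange_big; apply: eq_bigr => c _; rewrite summxE mulr_sumr.
    by apply: eq_bigr => x _; rewrite mxE.
  by rewrite trthE mulr1 sumr_const card_ord -[X in X = 1]mulr_natr mulVf.
have Kr0 : (0 < (K%:R : R)) by rewrite ltr0n.
have kinv0 : 0 <= kinv by rewrite invr_ge0 ler0n.
exists psi; split => // i.
rewrite /IH; apply: le_ereal_inf_tmp => y [sg [[_ trsg] ->]].
rewrite /DH; apply: ereal_sup_ubound; exists M'; split.
- by rewrite /loewner subr0.
- exact: M1.
- rewrite trW; under eq_bigr do rewrite K6 -scalemxAr mxtraceZ.
  rewrite -mulr_sumr.
  have -> : ((1 - eps)%:C : R[i])%C = kinv * \sum_(m < K) ((1 - eps)%:C)%C.
    rewrite sumr_const card_ord -[(((1 - eps)%:C)%C *+ K)]mulr_natr mulrC -mulrA mulfV //.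
    by rewrite mulr1.
  apply: ler_wpM2l => //; apply: ler_sum => m _.
  have := Hsucc m i; rewrite lerBlDr addrC -lerBlDr.
  by rewrite rmorphB rmorph1.
- have trF : \tr (M' *m (sg *t ptrace1 (tens_map (N i) (@id 'M[R[i]]_dA) (proj psi)))) = kinv.
    rewrite trW; under eq_bigr do rewrite K7.
    by rewrite -mxtrace_sum -mulmx_suml Dsum mul1mx mxtrace_tens trsg mul1r mxtraceZ trthE mulr1.
  rewrite trF /kinv -(rmorph_nat (real_complex R)) -fmorphV /=.
  rewrite /neglog2 invr_eq0 (negbTE (lt0r_neq0 Kr0)); congr (_%:E).
  by rewrite /log2 lnV ?posrE // mulNr opprK.
Qed.
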